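(* Let $G=(V,E)$ be an unweighted undirected graph on $n$ nodes and let $D\ge 2$ be an integer. Let $R$ be a random multiset of $\lceil 2\frac{n}{D}\ln D\rceil$ elements, each chosen uniformly and independently at random from $V$. For a node $u$, call a node $v$ uncovered for $u$ if $dist_G(u,v)\ge D$ and no node of $R$ lies on any shortest path between $u$ and $v$; call $u$ sick if it has more than $\frac{n}{D}$ uncovered nodes. Let $S$ be the set of sick nodes. Then \[ \Pr\!\left[|S|\ge 2\frac{n}{D}\right]\le \frac12. \]
   Context: $dist_G(u,v)$ denotes the shortest-path distance (number of edges) in $G$. A shortest path between $u$ and $v$ includes its endpoints $u$ and $v$. *)

(* Defs.v *)
From HB Require Import structures.
From mathcomp Require Import all_boot all_order all_algebra.
From mathcomp Require Import boolp reals exp.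
Set Implicit Arguments. Unset Strict Implicit. Unset Printing Implicit Defensive.
Import Order.TTheory GRing.Theory Num.Theory.

Section Defs.
Variables (T : finType) (e : rel T).

(* a walk of length l from u to v: u :: p with p of size l, consecutive
   vertices adjacent, ending at v *)
Definition walk (u v : T) (p : seq T) : Prop :=
  path e u p /\ last u p = v.

Definition is_dist (u v : T) (d : nat) : Prop :=
  (exists p, walk u v p /\ size p = d) /\
  (forall p, walk u v p -> d <= size p).

(* shortest path between u and v: a walk of length dist_G(u,v); its node set
   (including both endpoints) is u :: p *)
Definition shortest_path (u v : T) (p : seq T) : Prop :=
  walk u v p /\ is_dist u v (size p).

Definition uncovered (D : nat) (R : seq T) (u v : T) : Prop :=
  exists d, is_dist u v d /\ D <= d /\
    forall p, shortest_path u v p -> forall x, x \in u :: p -> x \notin R.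

Definition uncovered_set (D : nat) (R : seq T) (u : T) : {set T} :=
  finset (fun v => `[< uncovered D R u v >]).

Definition sick {K : realType} (D : nat) (R : seq T) (u : T) : bool :=
  (#|T|%:R / D%:R < (#|uncovered_set D R u|)%:R :> K)%R.

Definition sick_set {K : realType} (D : nat) (R : seq T) : {set T} :=
  finset (fun u => sick (K:=K) D R u).

End Defs.

Definition nsamples {K : realType} (n D : nat) : nat :=
  `|Num.ceil (2 * (n%:R / D%:R) * ln (D%:R : K))%R|%N.

(* Main.v *)
Require Import Defs.
From HB Require Import structures.
From mathcomp Require Import all_boot all_order all_algebra.
From mathcomp Require Import boolp reals exp.
From mathcomp Require Import sequences.
From mathcomp Require Import ring lra zify.
Import Order.TTheory GRing.Theory Num.Theory.
Local Open Scope ring_scope.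

Lemma real_bound (K : realType) (n D : nat) : (0 < n)%N -> (2 <= D)%N ->
  (D ^ 2 * (n - D.+1) ^ (nsamples (K:=K) n D) <= n ^ (nsamples (K:=K) n D))%N.
Proof.
move=> n0 D2; set k := nsamples n D.
have nR : (0 : K) < n%:R by rewrite ltr0n.
have DR : (0 : K) < D%:R by rewrite ltr0n; apply: leq_trans D2.
have lnD : (0 : K) <= ln (D%:R : K) by apply: ln_ge0; rewrite ler1n; apply: leq_trans D2.
have kR : 2 * (n%:R / D%:R) * ln (D%:R : K) <= k%:R.
  rewrite /k /nsamples natr_absz ger0_norm.
    exact: ceil_ge.
  rewrite ceil_ge0; apply: (@lt_le_trans _ _ 0); first by rewrite ltrN10.
  by apply: mulr_ge0 => //; apply: mulr_ge0 => //; apply: divr_ge0; apply: ltW.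
set x : K := D.+1%:R / n%:R.
have ha : (n - D.+1)%:R / n%:R <= expR (- x).
  case: (leqP D.+1 n) => hn.
    rewrite natrB // mulrBl divff ?gt_eqF //.
    by have := expR_ge1Dx (- x); rewrite /x.
  have -> : (n - D.+1 = 0)%N by apply/eqP; rewrite subn_eq0 ltnW.
  by rewrite mul0r ltW // expR_gt0.
have hxk : 2 * ln (D%:R : K) <= x * k%:R.
  apply: (le_trans _ (ler_wpM2l _ kR)); last by rewrite /x divr_ge0 // ltW.
  have -> : x * (2 * (n%:R / D%:R) * ln (D%:R : K)) = (D.+1%:R / D%:R) * (2 * ln (D%:R : K)).
    by rewrite /x; field; rewrite ?gt_eqF.
  apply: ler_peMl; first by rewrite mulr_ge0.
  by rewrite ler_pdivlMr // mul1r ler_nat.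
have h1 : ((n - D.+1)%:R / n%:R) ^+ k <= (D%:R : K)^-2.
  have hk : ((n - D.+1)%:R / n%:R) ^+ k <= expR (- x) ^+ k.
    by apply: lerXn2r (ha); rewrite nnegrE ?divr_ge0 // ?ltW // ?expR_gt0.
  apply: (le_trans hk).
  rewrite -expRM_natr mulNr.
  apply: (le_trans (_ : _ <= expR (- (2 * ln (D%:R : K))))).
    by rewrite ler_expR lerN2.
  by rewrite expRN expRM_natl lnK // posrE.
move: h1; rewrite expr_div_n ler_pdivrMr ?exprn_gt0 // => h1.
rewrite -(ler_nat K) natrM !natrX.
rewrite -(ler_pM2l (_ : 0 < (D%:R : K)^-2)); last by rewrite invr_gt0 exprn_gt0.
by rewrite mulrA mulVf ?mul1r // expf_neq0 // gt_eqF.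
Qed.

Local Close Scope ring_scope.
Lemma shortest_exists (T : finType) (e : rel T) (u v : T) d :
  is_dist e u v d -> exists q, shortest_path e u v q /\ uniq (u :: q) /\ size q = d.
Proof.
move=> hd; have [[p [[pp lp] sp]] hmin] := hd.
move: lp; case: (shortenP pp) => p' pp' up' sub lp'.
have w : walk e u v p' by split => //; rewrite lp'.
have sz : size p' = d.
  apply/eqP; rewrite eqn_leq hmin // andbT -sp.
  by apply: uniq_leq_size => //; move: up'; rewrite cons_uniq => /andP[].
exists p'; split; last by [].
by split => //; rewrite sz.
Qed.

Lemma tuple_count (T : finType) (A : {set T}) k :
  #|[set t : k.-tuple T | all (mem A) t]| <= #|A| ^ k.
Proof.
pose f (t : k.-tuple T) : {ffun 'I_k -> T} := [ffun i => tnth t i].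
have finj : injective f.
  move=> t1 t2 /ffunP H; apply: eq_from_tnth => i; have := H i; by rewrite !ffunE.
rewrite -(card_imset _ finj).
apply: (leq_trans (_ : _ <= #|@ffun_on 'I_k A|)); last by rewrite card_ffun_on card_ord.
apply: subset_leq_card; apply/subsetP => g /imsetP [t]; rewrite inE => /allP Ht ->.
by apply/ffun_onP => i; rewrite ffunE; apply: Ht; apply: mem_tnth.
Qed.

Lemma pair_count (T : finType) (e : rel T) D k (u v : T) :
  #|[set R : k.-tuple T | v \in uncovered_set e D R u]| <= (#|T| - D.+1) ^ k.
Proof.
case: (pickP [pred R : k.-tuple T | v \in uncovered_set e D R u]) => [R0 /=|none]; last first.
  rewrite (_ : [set R | _] = set0) ?cards0 //.
  by apply/setP => R; have := none R; rewrite /= !inE => ->.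
rewrite inE => /asboolP [d [hd [Dd _]]].
have [q [sq [uq szq]]] := (@shortest_exists _ _ _ _ _ hd).
pose B := [set x in u :: q].
have cB : #|B| = d.+1 by rewrite cardsE; move/card_uniqP: uq => ->; rewrite /= szq.
apply: (leq_trans (_ : _ <= #|~: B| ^ k)).
  apply: leq_trans; last exact: (tuple_count _ (~: B) k); apply: subset_leq_card; apply/subsetP => R.
  rewrite !inE => /asboolP [d' [_ [_ hR]]]; apply/allP => x xR; rewrite !inE.
  by apply/negP => xq; have := hR q sq x xq; rewrite xR.
rewrite cardsCs setCK cB; elim: k {R0} => // k IH; rewrite !expnS leq_mul //.
by apply: leq_sub2l.
Qed.

Local Open Scope ring_scope.
Lemma card_sum (X : finType) (A : {pred X}) : #|A| = (\sum_x (x \in A : nat))%N.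
Proof. by rewrite -sum1_card big_mkcond; apply: eq_bigr => x _; case: (x \in A). Qed.

Theorem lemma3 (K : realType) (T : finType) (e : rel T)
    (e_sym : symmetric e) (e_irr : irreflexive e)
    (n_gt0 : (0 < #|T|)%N) (D : nat) (hD : (2 <= D)%N) :
  let n := #|T| in
  let k := nsamples (K:=K) n D in
  (#|[set R : k.-tuple T |
       2 * (n%:R / D%:R) <= (#|sick_set (K:=K) e D R|)%:R :> K]|)%:R
    / (n ^ k)%:R <= (1 / 2 : K).
Proof.
rewrite /=; set n := #|T|; set k := nsamples n D.
set S := [set R : k.-tuple T | _].
have DR : (0 : K) < D%:R by rewrite ltr0n; apply: leq_trans hD.
pose X (R : k.-tuple T) := (\sum_u #|uncovered_set e D R u|)%N.
have hbad : forall R, R \in S -> (2 * n * n.+1 <= X R * D ^ 2)%N.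
  move=> R; rewrite inE mulrA ler_pdivrMr // -!natrM ler_nat => hR.
  set s := #|sick_set e D R| in hR.
  have h1 : (s * n.+1 <= X R * D)%N.
    rewrite /X big_distrl /= (bigID (fun u => u \in sick_set (K:=K) e D R)) /=.
    apply: leq_trans (leq_addr _ _).
    rewrite /s -sum1_card big_distrl /=; apply: leq_sum => u.
    rewrite inE /sick ltr_pdivrMr // -natrM ltr_nat mul1n => //.
  have : (2 * n * n.+1 <= s * D * n.+1)%N by rewrite leq_mul2r hR orbT.
  move=> h2; apply: leq_trans h2 _.
  by rewrite expnS expn1 mulnA -mulnA [(D * _)%N]mulnC mulnA leq_mul2r h1 orbT.
have htot : (\sum_R X R <= n * (n * (#|T| - D.+1) ^ k))%N.
  rewrite /X exchange_big /=.
  apply: (@leq_trans (\sum_(u : T) (n * (#|T| - D.+1) ^ k))%N); last first.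
    by rewrite sum_nat_const.
  apply: leq_sum => u _.
  under eq_bigr => R _ do rewrite card_sum.
  rewrite exchange_big /=.
  apply: (@leq_trans (\sum_(v : T) ((#|T| - D.+1) ^ k))%N); last first.
    by rewrite sum_nat_const.
  apply: leq_sum => v _.
  apply: leq_trans (pair_count _ e D k u v).
  by rewrite card_sum; apply: leq_sum => R _; rewrite inE.
have hS : (#|S| * (2 * n * n.+1) <= (\sum_R X R) * D ^ 2)%N.
  rewrite -sum_nat_const big_distrl /=.
  apply: (@leq_trans (\sum_(R in S) X R * D ^ 2)%N).
    by apply: leq_sum => R; apply: hbad.
  by rewrite [X in (_ <= X)%N](bigID (fun R => R \in S)) /= leq_addr.
have hrb := real_bound K _ _ n_gt0 hD.
rewrite -/n -/k in hrb.
set M := ((n - D.+1) ^ k)%N in hrb htot.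
set N := (n ^ k)%N in hrb *.
set Y := (\sum_R X R)%N in htot hS.
have h3 : (#|S| * (2 * n * n.+1) <= n * n * N)%N.
  apply: (leq_trans hS); apply: (@leq_trans (n * (n * M) * D ^ 2)%N).
    by rewrite leq_mul2r htot orbT.
  by rewrite -!mulnA [(M * _)%N]mulnC !leq_mul2l hrb !orbT.
have h4 : (2 * #|S| <= N)%N.
  have h5 : (n * n * (2 * #|S|) <= n * n * N)%N.
    apply: leq_trans h3.
    have -> : (#|S| * (2 * n * n.+1) = n * n * (2 * #|S|) + 2 * #|S| * n)%N by ring.
    exact: leq_addr.
  by rewrite leq_pmul2l ?muln_gt0 ?n_gt0 // in h5.
have NR : (0 : K) < N%:R by rewrite ltr0n expn_gt0 n_gt0.
rewrite ler_pdivrMr //.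
have : (2 * #|S|)%:R <= N%:R :> K by rewrite ler_nat.
rewrite natrM => h; lra.
Qed.
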